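(* Let $q$ be odd with characteristic $p$, and let $n\ge 2$. The number $K(n,q)$ of vectors $x \in \mathbb{F}_q^n$ with $(x,x) = 0$ and $(x,\mathbf{1}) \neq 0$ is \[ K(n,q) = \begin{cases} q^{n-2}(q-1), & p \mid n,\\ q^{n-2}(q-1) - \chi((-1)^{(n-1)/2}n)(q-1)q^{(n-3)/2}, & p\nmid n,\ n\text{ odd},\\ q^{n-2}(q-1) + \chi((-1)^{n/2})(q-1)q^{(n-2)/2}, & p\nmid n,\ n \text{ even}.\end{cases} \]
   Context: $(x,y) = \sum_i x_iy_i$ is the standard inner product, $\mathbf{1}$ the all-ones vector, and $\chi$ the quadratic character of $\mathbb{F}_q$ ($\chi(a)=1$ for nonzero squares, $-1$ for nonsquares, $\chi(0)=0$); $n$ is viewed as an element of $\mathbb{F}_q$ inside $\chi$. *)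

(* Defs.v *)
From HB Require Import structures.
From mathcomp Require Import all_boot all_order all_algebra all_field.
Set Implicit Arguments. Unset Strict Implicit. Unset Printing Implicit Defensive.
Import Order.TTheory GRing.Theory Num.Theory.
Local Open Scope ring_scope.

Definition dotv (F : finFieldType) (n : nat) (x y : 'rV[F]_n) : F :=
  \sum_(i < n) x 0 i * y 0 i.

Definition ones (F : finFieldType) (n : nat) : 'rV[F]_n := const_mx 1.

Definition qchi (F : finFieldType) (a : F) : int :=
  if a == 0 then 0
  else if [exists b : F, b ^+ 2 == a] then 1 else -1.

Definition Kcount (F : finFieldType) (n : nat) : nat :=
  #|[set x : 'rV[F]_n | (dotv x x == 0) && (dotv x (ones F n) != 0)]|.

(* Main.v *)
Require Import Defs.
From HB Require Import structures.
From mathcomp Require Import all_boot all_order all_algebra all_field all_fingroup all_solvable.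
From mathcomp Require Import ring lra zify.
Import Order.TTheory GRing.Theory Num.Theory.
Set Implicit Arguments. Unset Strict Implicit. Unset Printing Implicit Defensive.
Local Open Scope ring_scope.

Lemma two_neq0 (F : finFieldType) : odd #|F| -> (2 : F) != 0.
Proof.
move=> hodd; apply/negP => /eqP h2.
have c2 : 2%N \in [pchar F] by rewrite inE /= h2 eqxx.
have := fin_ring_pchar_abelem c2.
move/abelem_pgroup/card_pgroup.
rewrite cardsT => hc.
move: hodd; rewrite hc.
case E: (logn 2 #|F|) => [|k].
  by have := finNzRing_gt1 F; rewrite hc E.
by rewrite expnS oddM.
Qed.

Definition sq (F : finFieldType) (a : F) := [exists b : F, b ^+ 2 == a].

Lemma sum_ind1 (T : finType) (x : T) : \sum_(t : T) ((t == x)%:R : int) = 1.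
Proof. by rewrite (bigD1 x) //= eqxx big1 ?addr0 // => t /negbTE ->. Qed.

Lemma sum_ind1r (T : finType) (x : T) : \sum_(t : T) ((x == t)%:R : int) = 1.
Proof. by rewrite -[RHS](sum_ind1 x); apply: eq_bigr => t _; rewrite eq_sym. Qed.

Lemma qchi0 (F : finFieldType) : qchi (0 : F) = 0.
Proof. by rewrite /qchi eqxx. Qed.

Lemma qchiE (F : finFieldType) (a : F) : a != 0 -> qchi a = if sq a then 1 else -1.
Proof. by rewrite /qchi => /negbTE ->. Qed.

Lemma sqM (F : finFieldType) (a b : F) : b != 0 -> sq (b ^+ 2 * a) = sq a.
Proof.
move=> hb; apply/existsP/existsP => [[c /eqP hc]|[c /eqP hc]].
  exists (c / b); apply/eqP; rewrite expr_div_n hc mulrC mulrA mulVf ?mul1r //.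
  by rewrite expf_neq0.
by exists (b * c); rewrite exprMn hc.
Qed.

Lemma qchi_sq (F : finFieldType) (a b : F) : b != 0 -> qchi (b ^+ 2 * a) = qchi a.
Proof.
move=> hb; rewrite /qchi mulf_eq0 expf_eq0 /= (negbTE hb) /=.
by case: (a == 0) => //; rewrite -/(sq _) -/(sq _) sqM.
Qed.

Lemma card_roots (F : finFieldType) (a : F) : (2 : F) != 0 ->
  \sum_(t : F) ((t ^+ 2 == a)%:R : int) = 1 + qchi a.
Proof.
move=> h2.
have [->|a0] := eqVneq a 0.
  rewrite qchi0 addr0 -[RHS](sum_ind1 (0 : F)); apply: eq_bigr => t _.
  by rewrite expf_eq0.
rewrite qchiE //; case: ifP => hs.
  case/existsP: hs => b /eqP hb.
  have b0 : b != 0 by apply: contraNneq a0 => b0; rewrite -hb b0 expr0n.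
  have bb : b != - b.
    apply/negP => /eqP e.
    have : (2:F) * b == 0 by rewrite mulr_natl mulr2n {2}e subrr.
    by rewrite mulf_eq0 (negbTE h2) (negbTE b0).
  transitivity (\sum_(t : F) ((t == b)%:R + (t == - b)%:R : int)).
    2: by rewrite big_split /= !sum_ind1.
  apply: eq_bigr => t _.
  rewrite -hb eqf_sqr.
  case: (eqVneq t b) => [->|tb]; first by rewrite (negbTE bb).
  by rewrite /= add0r.
rewrite big1 ?subrr // => t _; case: eqP => // e.
have : sq a by apply/existsP; exists t; rewrite e.
by rewrite hs.
Qed.

Lemma sum_qchi (F : finFieldType) : (2 : F) != 0 -> \sum_(a : F) qchi a = 0.
Proof.
move=> h2.
have : \sum_(a : F) (1 + qchi a) = #|F|%:R.
  under eq_bigr do rewrite -card_roots //.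
  rewrite exchange_big /=.
  rewrite -sum1_card natr_sum; apply: eq_bigr => t _.
  by rewrite (sum_ind1r (t ^+ 2)).
rewrite big_split /= => h.
have e1 : \sum_(a:F) (1:int) = #|F|%:R by rewrite sumr_const.
by apply: (addrI (#|F|%:R : int)); rewrite addr0 -[RHS]h e1.
Qed.

Lemma qchi_sqE (F : finFieldType) (a : F) : qchi a = 1 -> exists2 s, s != 0 & a = s ^+ 2.
Proof.
rewrite /qchi; case: eqP => // a0; case: ifP => // /existsP [s /eqP hs] _.
exists s; last by [].
by apply/eqP => s0; apply: a0; rewrite -hs s0 expr0n.
Qed.

Lemma qchi_vals (F : finFieldType) (a : F) : a != 0 -> qchi a = 1 \/ qchi a = -1.
Proof. by move=> a0; rewrite qchiE //; case: ifP; [left|right]. Qed.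

Lemma qchi_le1 (F : finFieldType) (a : F) : qchi a <= 1.
Proof. by rewrite /qchi; case: ifP => //; case: ifP. Qed.

Lemma qchi_nsqM (F : finFieldType) (a x : F) : (2 : F) != 0 ->
  qchi a = -1 -> qchi x = -1 -> qchi (a * x) = 1.
Proof.
move=> h2 ha hx.
have a0 : a != 0 by apply/eqP => a0; move: ha; rewrite a0 qchi0.
have hs : \sum_(y : F) (- (qchi y + qchi (a * y))) = 0.
  have e : \sum_(y : F) qchi (a * y) = \sum_(y : F) qchi y.
    by rewrite [RHS](reindex_inj (mulfI a0)).
  rewrite sumrN big_split /= e sum_qchi //.
have hpos : forall y : F, true -> 0 <= - (qchi y + qchi (a * y)).
  move=> y _; have [->|y0] := eqVneq y 0; first by rewrite mulr0 qchi0 addr0 oppr0.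
  case: (qchi_vals y0) => e.
    rewrite e; have [s s0 ->] := qchi_sqE e.
    by rewrite mulrC qchi_sq // ha subrr oppr0.
  by rewrite e oppzD opprK subr_ge0 qchi_le1.
have := @psumr_eq0P _ _ _ _ hpos hs x isT.
by rewrite hx => /eqP; rewrite oppr_eq0 addrC subr_eq0 => /eqP.
Qed.

Lemma qchiM (F : finFieldType) (a b : F) : (2 : F) != 0 ->
  qchi (a * b) = qchi a * qchi b.
Proof.
move=> h2.
have [->|a0] := eqVneq a 0; first by rewrite mul0r !qchi0 mul0r.
have [->|b0] := eqVneq b 0; first by rewrite mulr0 !qchi0 mulr0.
case: (qchi_vals a0) => ea.
  rewrite ea; have [s s0 ->] := qchi_sqE ea; by rewrite qchi_sq // mul1r.
case: (qchi_vals b0) => eb.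
  rewrite eb; have [s s0 ->] := qchi_sqE eb; by rewrite mulrC qchi_sq // mulr1.
by rewrite qchi_nsqM // ea eb.
Qed.

Lemma sum_reindex (F : finFieldType) (h : F -> F) (f : F -> int) :
  injective h -> \sum_(u : F) f (h u) = \sum_(u : F) f u.
Proof. by move=> hi; rewrite [RHS](reindex_inj hi). Qed.

Lemma sum_qchi_shift (F : finFieldType) (c : F) : (2 : F) != 0 ->
  \sum_(u : F) qchi (c - u) = 0.
Proof.
move=> h2; rewrite (@sum_reindex _ (fun u => c - u) (@qchi F)) ?sum_qchi //.
by move=> x y /addrI /oppr_inj.
Qed.

Lemma jacobi (F : finFieldType) (c : F) : (2 : F) != 0 ->
  \sum_(u : F) qchi u * qchi (c - u) =
  if c == 0 then (#|F|%:R - 1) * qchi (-1 : F) else - qchi (-1 : F).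
Proof.
move=> h2; have [->|c0] := eqVneq c 0.
  transitivity (\sum_(u : F) (qchi (-1 : F) - (u == 0)%:R * qchi (-1 : F))).
    apply: eq_bigr => u _; have [->|u0] := eqVneq u 0.
      by rewrite qchi0 mul0r mul1r subrr.
    rewrite mul0r subr0 -qchiM // (_ : u * (0 - u) = u ^+ 2 * -1).
      by rewrite qchi_sq.
    by rewrite sub0r mulrN mulrN1 expr2.
  rewrite big_split /= sumrN -mulr_suml sum_ind1 mul1r sumr_const.
  by rewrite mulrBl mul1r mulr_natl.
transitivity (\sum_(u : F) (qchi (c / u - 1) - (u == 0)%:R * qchi (-1 : F))).
  apply: eq_bigr => u _; have [->|u0] := eqVneq u 0.
    by rewrite qchi0 mul0r invr0 mulr0 sub0r mul1r subrr.
  rewrite mul0r subr0 -qchiM // -[RHS](qchi_sq _ u0); congr qchi.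
  by field.
rewrite big_split /= sumrN -mulr_suml sum_ind1 mul1r.
rewrite (@sum_reindex _ (fun u => c / u - 1) (@qchi F)) ?sum_qchi ?add0r //.
move=> x y /addIr /(mulfI c0) /invr_inj //.
Qed.

Lemma sum_sq (F : finFieldType) (f : F -> int) : (2 : F) != 0 ->
  \sum_(t : F) f (t ^+ 2) = \sum_(u : F) (1 + qchi u) * f u.
Proof.
move=> h2.
transitivity (\sum_(t : F) \sum_(u : F) ((t ^+ 2 == u)%:R * f u)).
  apply: eq_bigr => t _; rewrite (bigD1 (t ^+ 2)) //= eqxx mul1r big1 ?addr0 //.
  by move=> u /negbTE; rewrite eq_sym => ->; rewrite mul0r.
rewrite exchange_big /=; apply: eq_bigr => u _.
by rewrite -mulr_suml card_roots.
Qed.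

Definition Gc (F : finFieldType) (m : nat) (c : F) : int :=
  \sum_(x : 'rV[F]_m) ((dotv x x == c)%:R : int).

Lemma dotv_row_mx (F : finFieldType) (m : nat) (t : F) (x : 'rV[F]_m) :
  let v := (row_mx (const_mx t : 'rV[F]_1) x : 'rV[F]_(1 + m)) in
  dotv v v = t ^+ 2 + dotv x x.
Proof.
rewrite /= /dotv big_split_ord /= big_ord1.
by congr (_ + _); [rewrite row_mxEl mxE expr2 | apply: eq_bigr => i _; rewrite row_mxEr].
Qed.

Lemma Gc_rec (F : finFieldType) (m : nat) (c : F) :
  Gc m.+1 c = \sum_(t : F) Gc m (c - t ^+ 2).
Proof.
rewrite /Gc.
pose h := fun p : F * 'rV[F]_m => (row_mx (const_mx p.1 : 'rV[F]_1) p.2 : 'rV[F]_(1 + m)).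
have hb : bijective h.
  exists (fun v : 'rV[F]_(1 + m) => (lsubmx v 0 0, rsubmx v)).
    by case=> t x; rewrite /h /= row_mxKl row_mxKr mxE.
  move=> v; rewrite /h /=; rewrite -{3}(hsubmxK v); congr row_mx.
  by apply/matrixP => i j; rewrite !ord1 mxE.
rewrite (reindex h) /=; last by apply: onW_bij.
rewrite pair_big /=; apply: eq_bigr => [[t x]] _ /=.
rewrite dotv_row_mx; congr ((_ : bool)%:R).
by apply/eqP/eqP => e; [rewrite -e addrC addKr | rewrite e addrC subrK].
Qed.

Lemma Gc0 (F : finFieldType) (c : F) : Gc 0 c = (0 == c)%:R.
Proof.
rewrite /Gc (eq_bigr (fun _ => (0 == c)%:R)); last first.
  by move=> x _; rewrite /dotv big_ord0.
by rewrite sumr_const card_mx expn0.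
Qed.

Lemma sum_ind_sub (F : finFieldType) (c : F) (f : F -> int) :
  \sum_(u : F) f u * (c - u == 0)%:R = f c.
Proof.
rewrite (bigD1 c) //= subrr eqxx mulr1 big1 ?addr0 // => u hu.
by rewrite subr_eq0 eq_sym (negbTE hu) mulr0.
Qed.

Lemma sum_ind_sub1 (F : finFieldType) (c : F) :
  \sum_(u : F) ((c - u == 0)%:R : int) = 1.
Proof.
by rewrite -[RHS](sum_ind_sub c (fun _ => 1)); apply: eq_bigr => u _; rewrite mul1r.
Qed.

Lemma Gc_closed (F : finFieldType) (k : nat) : (2 : F) != 0 ->
  forall c : F,
  Gc (k.*2.+1) c = (#|F|%:R) ^+ k.*2 + (#|F|%:R) ^+ k * qchi (-1 : F) ^+ k * qchi c /\
  Gc (k.*2.+2) c = (#|F|%:R) ^+ k.*2.+1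
     + (#|F|%:R) ^+ k * qchi (-1 : F) ^+ k.+1 * (#|F|%:R * (c == 0)%:R - 1).
Proof.
move=> h2.
set q : int := #|F|%:R; set e := qchi (-1 : F).
have sum1 : \sum_(u : F) (1 : int) = q by rewrite sumr_const.
have step1 : forall k, (forall c : F, Gc k.*2.+1 c = q ^+ k.*2 + q ^+ k * e ^+ k * qchi c) ->
   forall c : F, Gc k.*2.+2 c = q ^+ k.*2.+1 + q ^+ k * e ^+ k.+1 * (q * (c == 0)%:R - 1).
  move=> j IH c; rewrite Gc_rec (sum_sq (fun u => Gc j.*2.+1 (c - u))) //.
  under eq_bigr do rewrite IH.
  transitivity (\sum_(u : F) (q ^+ j.*2 * 1 + q ^+ j.*2 * qchi u + (q ^+ j * e ^+ j) * qchi (c - u)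
      + (q ^+ j * e ^+ j) * (qchi u * qchi (c - u)))).
    by apply: eq_bigr => u _; ring.
  rewrite !big_split /= -!mulr_sumr sum1 sum_qchi // sum_qchi_shift // jacobi //.
  rewrite -/q -/e; case: eqP => _ /=; rewrite !exprS ?mulr1 ?mulr0; ring.
have step2 : forall k, (forall c : F, Gc k.*2.+2 c = q ^+ k.*2.+1 + q ^+ k * e ^+ k.+1 * (q * (c == 0)%:R - 1)) ->
   forall c : F, Gc k.+1.*2.+1 c = q ^+ k.+1.*2 + q ^+ k.+1 * e ^+ k.+1 * qchi c.
  move=> j IH c; rewrite doubleS Gc_rec (sum_sq (fun u => Gc j.*2.+2 (c - u))) //.
  under eq_bigr do rewrite IH.
  transitivity (\sum_(u : F) (q ^+ j.*2.+1 * 1 + q ^+ j.*2.+1 * qchi u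
      + (q ^+ j * e ^+ j.+1 * q) * (1 * (c - u == 0)%:R)
      + (q ^+ j * e ^+ j.+1 * q) * (qchi u * (c - u == 0)%:R)
      - (q ^+ j * e ^+ j.+1) * 1 - (q ^+ j * e ^+ j.+1) * qchi u)).
    by apply: eq_bigr => u _; ring.
  rewrite !big_split /= !sumrN -!mulr_sumr sum1 sum_qchi // !sum_ind_sub.
  rewrite -/q sum_ind_sub1 ?doubleS !exprS; ring.
have main : forall j, (forall c : F, Gc j.*2.+1 c = q ^+ j.*2 + q ^+ j * e ^+ j * qchi c) /\
   (forall c : F, Gc j.*2.+2 c = q ^+ j.*2.+1 + q ^+ j * e ^+ j.+1 * (q * (c == 0)%:R - 1)).
  elim => [|j [IH1 IH2]].
    have g1' : forall c : F, Gc (0.*2.+1) c = q ^+ 0.*2 + q ^+ 0 * e ^+ 0 * qchi c.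
      move=> c'; rewrite Gc_rec /= expr0 !mul1r -card_roots //; apply: eq_bigr => t _.
      by rewrite Gc0 eq_sym subr_eq0 eq_sym.
    by split; [apply: g1' | apply: step1].
  have IH3 := step2 j IH2.
  by split; [apply: IH3 | apply: step1].
by move=> c; have [A B] := main k; split; [apply: A | apply: B].
Qed.

Lemma LfE (F : finFieldType) (n : nat) (x : 'rV[F]_n) :
  dotv x (ones F n) = \sum_(i < n) x 0 i.
Proof. by apply: eq_bigr => i _; rewrite mxE mulr1. Qed.

Lemma Lf_add (F : finFieldType) (n : nat) (x : 'rV[F]_n) (t : F) :
  dotv (x + const_mx t) (ones F n) = dotv x (ones F n) + t *+ n.
Proof.
rewrite !LfE; transitivity (\sum_(i < n) (x 0 i + t)).
  by apply: eq_bigr => i _; rewrite !mxE.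
by rewrite big_split /= sumr_const card_ord.
Qed.

Lemma Qf_add (F : finFieldType) (n : nat) (x : 'rV[F]_n) (t : F) :
  dotv (x + const_mx t) (x + const_mx t) =
  dotv x x + (t * dotv x (ones F n)) *+ 2 + t ^+ 2 *+ n.
Proof.
rewrite LfE /dotv; transitivity (\sum_(i < n) (x 0 i * x 0 i + (t * x 0 i) *+ 2 + t ^+ 2)).
  by apply: eq_bigr => i _; rewrite !mxE; ring.
by rewrite !big_split /= sumr_const card_ord -mulr_sumr mulr2n.
Qed.

Lemma Lf_delta (F : finFieldType) (n : nat) (x : 'rV[F]_n.+1) (b : F) :
  dotv (x + b *: delta_mx 0 ord0) (ones F n.+1) = dotv x (ones F n.+1) + b.
Proof.
rewrite !LfE; transitivity (\sum_(i < n.+1) (x 0 i + b * (i == ord0)%:R)).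
  by apply: eq_bigr => i _; rewrite !mxE /=.
rewrite big_split /= -mulr_sumr; congr (_ + _).
rewrite (bigD1 ord0) //= big1 ?addr0 ?mulr1 // => i /negbTE ->.
by [].
Qed.

Lemma fiber_card (F : finFieldType) (n : nat) (b : F) :
  \sum_(x : 'rV[F]_n.+1) ((dotv x (ones F n.+1) == b)%:R : int) = (#|F|%:R) ^+ n.
Proof.
have fib : forall b' : F, \sum_(x : 'rV[F]_n.+1) ((dotv x (ones F n.+1) == b')%:R : int) =
   \sum_(x : 'rV[F]_n.+1) ((dotv x (ones F n.+1) == 0)%:R : int).
  move=> b'; rewrite [LHS](reindex_inj (addIr (b' *: delta_mx 0 ord0))) /=.
  by apply: eq_bigr => x _; rewrite Lf_delta -subr_eq0 addrK.
have tot : \sum_(b' : F) \sum_(x : 'rV[F]_n.+1) ((dotv x (ones F n.+1) == b')%:R : int) =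
   (#|F|%:R) ^+ n.+1.
  rewrite exchange_big /= (eq_bigr (fun _ => 1)); last by move=> x _; rewrite sum_ind1r.
  by rewrite sumr_const card_mx mul1n natrX.
rewrite fib; apply: (@mulfI _ (#|F|%:R : int)).
  by rewrite pnatr_eq0 -lt0n; apply/card_gt0P; exists 0.
by rewrite -exprS -tot (eq_bigr _ (fun b' _ => fib b')) sumr_const mulr_natl.
Qed.

Lemma Kz_sum (F : finFieldType) (n : nat) : (Kcount F n)%:Z =
  \sum_(x : 'rV[F]_n) (((dotv x x == 0) && (dotv x (ones F n) != 0))%:R : int).
Proof.
rewrite /Kcount -sum1_card -natz natr_sum big_mkcond /=; apply: eq_bigr => x _.
by rewrite inE; case: (_ && _).
Qed.

Lemma lin_unique (F : finFieldType) (Q a : F) : a != 0 ->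
  \sum_(t : F) ((Q + t * a == 0)%:R : int) = 1.
Proof.
move=> a0; rewrite -[RHS](sum_ind1 (- Q / a)); apply: eq_bigr => t _.
congr ((_ : bool)%:R); apply/eqP/eqP => h.
  by apply: (mulIf a0); rewrite divfK // -(addKr Q (t * a)) h addr0.
by rewrite h divfK // subrr.
Qed.

Lemma card_nonfiber (F : finFieldType) (n : nat) :
  \sum_(x : 'rV[F]_n.+1) ((dotv x (ones F n.+1) != 0)%:R : int) =
  (#|F|%:R) ^+ n.+1 - (#|F|%:R) ^+ n.
Proof.
transitivity (\sum_(x : 'rV[F]_n.+1) ((1 : int) - (dotv x (ones F n.+1) == 0)%:R)).
  by apply: eq_bigr => x _; case: eqP.
by rewrite sumrB sumr_const card_mx mul1n natrX fiber_card.
Qed.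

Lemma pdiv_case (F : finFieldType) (n : nat) : (2 : F) != 0 ->
  (n.+1)%:R = 0 :> F ->
  (#|F|%:R : int) * (Kcount F n.+1)%:Z = (#|F|%:R) ^+ n.+1 - (#|F|%:R) ^+ n.
Proof.
move=> h2 hn.
set L := fun x : 'rV[F]_n.+1 => dotv x (ones F n.+1).
have tr : forall t : F, (Kcount F n.+1)%:Z = \sum_(x : 'rV[F]_n.+1)
    (((dotv x x + (t * L x) *+ 2 == 0) && (L x != 0))%:R : int).
  move=> t; rewrite Kz_sum (reindex_inj (addIr (const_mx t))) /=.
  apply: eq_bigr => x _; rewrite Qf_add Lf_add -[t ^+ 2 *+ n.+1]mulr_natr -[t *+ n.+1]mulr_natr hn !mulr0 !addr0.
  by [].
transitivity (\sum_(t : F) (Kcount F n.+1)%:Z).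
  by rewrite sumr_const mulr_natl.
rewrite (eq_bigr _ (fun t _ => tr t)) exchange_big /= -card_nonfiber.
apply: eq_bigr => x _; rewrite -/(L x).
have [L0|L0] := eqVneq (L x) 0.
  by rewrite big1 // => t _; rewrite L0 andbF.
move: L0; rewrite /L => L0.
rewrite /=; under eq_bigr do rewrite andbT -mulrnAr.
by rewrite lin_unique // -mulr_natr mulf_neq0.
Qed.

Lemma hyp_count (F : finFieldType) (d : F) :
  \sum_(u : F) \sum_(v : F) ((u * v == d)%:R : int)
  = #|F|%:R - 1 + #|F|%:R * (d == 0)%:R.
Proof.
transitivity (\sum_(u : F) ((1 - (u == 0)%:R) + (u == 0)%:R * (#|F|%:R * (d == 0)%:R)) : int).
  apply: eq_bigr => u _; have [->|u0] := eqVneq u 0.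
    rewrite subrr add0r mul1r (eq_bigr (fun _ => (0 == d)%:R)); last first.
      by move=> v _; rewrite mul0r.
    by rewrite sumr_const -[_ *+ #|_|]mulr_natl eq_sym.
  rewrite /= subr0 mul0r addr0 -[RHS](sum_ind1 (d / u)); apply: eq_bigr => v _.
  congr ((_ : bool)%:R); apply/eqP/eqP => h.
    by rewrite -h; field.
  by rewrite h; field.
rewrite !big_split /= sumr_const -mulr_suml sum_ind1 mul1r sumrN sum_ind1.
by [].
Qed.

Lemma sum_pair_rot (F : finFieldType) (f : F -> F -> int) : (2 : F) != 0 ->
  \sum_(s : F) \sum_(r : F) f (s - r) (s + r) = \sum_(u : F) \sum_(v : F) f u v.
Proof.
move=> h2; rewrite !pair_big /=.
pose h := fun p : F * F => ((p.1 + p.2) / 2, (p.2 - p.1) / 2).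
have hb : bijective h.
  exists (fun p : F * F => (p.1 - p.2, p.1 + p.2)).
    by case=> u v; rewrite /h /=; congr pair; field.
  by case=> s r; rewrite /h /=; congr pair; field.
rewrite (reindex h) /=; last by apply: onW_bij.
by apply: eq_bigr => [[u v]] _ /=; congr f; field.
Qed.

Lemma M_count (F : finFieldType) (N e : F) : N != 0 -> (2 : F) != 0 ->
  \sum_(s : F) \sum_(r : F) ((e + N * r ^+ 2 == N * s ^+ 2)%:R : int)
  = #|F|%:R - 1 + #|F|%:R * (e == 0)%:R.
Proof.
move=> N0 h2.
have -> : (e == 0) = (e / N == 0) by rewrite mulf_eq0 invr_eq0 (negbTE N0) orbF.
rewrite -hyp_count -(sum_pair_rot (fun u v => ((u * v == e / N)%:R : int))) //.
apply: eq_bigr => s _; apply: eq_bigr => r _; congr ((_ : bool)%:R).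
apply/eqP/eqP => h.
  have he : e = N * s ^+ 2 - N * r ^+ 2 by rewrite -h; ring.
  by rewrite he; field.
have he : e = N * ((s - r) * (s + r)) by rewrite h; field.
by rewrite he; ring.
Qed.

Lemma const_mx_opp (F : finFieldType) (n : nat) (r : F) :
  const_mx (- r) + const_mx r = 0 :> 'rV[F]_n.
Proof. by apply/matrixP => i j; rewrite !mxE addNr. Qed.

Lemma decomp (F : finFieldType) (n : nat) (f : 'rV[F]_n -> int) :
  (n%:R : F) != 0 ->
  \sum_(x : 'rV[F]_n) f x = \sum_(r : F) \sum_(y : 'rV[F]_n)
     ((dotv y (ones F n) == 0)%:R * f (y + const_mx r)).
Proof.
move=> N0.
transitivity (\sum_(r : F) \sum_(x : 'rV[F]_n)
     ((dotv (x + const_mx (- r)) (ones F n) == 0)%:R * f x)); last first.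
  apply: eq_bigr => r _; rewrite [RHS](reindex_inj (addIr (const_mx (- r)))) /=.
  by apply: eq_bigr => x _; rewrite -addrA const_mx_opp addr0.
rewrite exchange_big /=; apply: eq_bigr => x _.
rewrite -mulr_suml -[LHS]mul1r; congr (_ * _).
rewrite -[LHS](lin_unique (dotv x (ones F n)) (_ : - (n%:R : F) != 0)).
  apply: eq_bigr => r _; by rewrite Lf_add mulrN mulr_natr mulNrn.
by rewrite oppr_eq0.
Qed.

Lemma ident (F : finFieldType) (m : nat) : (2 : F) != 0 -> ((m.+1)%:R : F) != 0 ->
  \sum_(s : F) Gc m.+1 ((m.+1)%:R * s ^+ 2) =
  (#|F|%:R - 1) * (#|F|%:R) ^+ m + #|F|%:R *
  \sum_(y : 'rV[F]_m.+1) (((dotv y y == 0) && (dotv y (ones F m.+1) == 0))%:R : int).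
Proof.
move=> h2 N0; set N : F := (m.+1)%:R.
rewrite /Gc.
under eq_bigr => s _ do rewrite (@decomp F m.+1 (fun x => ((dotv x x == N * s ^+ 2)%:R : int)) N0).
transitivity (\sum_(y : 'rV[F]_m.+1) ((dotv y (ones F m.+1) == 0)%:R *
   \sum_(s : F) \sum_(r : F) ((dotv y y + N * r ^+ 2 == N * s ^+ 2)%:R : int))).
  under eq_bigr => r _ do rewrite exchange_big.
  rewrite exchange_big /=; apply: eq_bigr => y _.
  rewrite mulr_sumr; apply: eq_bigr => s _.
  rewrite mulr_sumr; apply: eq_bigr => r _.
  have [L0|L0] := eqVneq (dotv y (ones F m.+1)) 0; last by rewrite !mul0r.
  by rewrite Qf_add L0 mulr0 mul0rn addr0 -[r ^+ 2 *+ _]mulr_natl.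
under eq_bigr => y _ do rewrite M_count //.
transitivity (\sum_(y : 'rV[F]_m.+1) ((#|F|%:R - 1) * (dotv y (ones F m.+1) == 0)%:R
   + #|F|%:R * ((dotv y y == 0) && (dotv y (ones F m.+1) == 0))%:R : int)).
  apply: eq_bigr => y _; case: (dotv y (ones F m.+1) == 0); case: (dotv y y == 0) => /=; ring.
by rewrite big_split /= -!mulr_sumr fiber_card.
Qed.

Lemma Kz_split (F : finFieldType) (n : nat) : (Kcount F n)%:Z = Gc n (0 : F) -
  \sum_(y : 'rV[F]_n) (((dotv y y == 0) && (dotv y (ones F n) == 0))%:R : int).
Proof.
rewrite Kz_sum /Gc; apply/eqP; rewrite eq_sym subr_eq -big_split /=; apply/eqP.
apply: eq_bigr => x _.
by case: (dotv x x == 0); case: (dotv x (ones F n) == 0).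
Qed.

Lemma sum_qchi_Nsq (F : finFieldType) (N : F) :
  \sum_(s : F) qchi (N * s ^+ 2) = (#|F|%:R - 1) * qchi N.
Proof.
transitivity (\sum_(s : F) (qchi N - (s == 0)%:R * qchi N)).
  apply: eq_bigr => s _; have [->|s0] := eqVneq s 0.
    by rewrite expr0n mulr0 qchi0 mul1r subrr.
  by rewrite mul0r subr0 mulrC qchi_sq.
rewrite big_split /= sumr_const sumrN -mulr_suml sum_ind1 mul1r.
by rewrite mulrBl mul1r mulr_natl.
Qed.

Lemma sum_Nsq0 (F : finFieldType) (N : F) : N != 0 ->
  \sum_(s : F) ((N * s ^+ 2 == 0)%:R : int) = 1.
Proof.
move=> N0; rewrite -[RHS](sum_ind1 (0 : F)); apply: eq_bigr => s _.
by rewrite mulf_eq0 (negbTE N0) expf_eq0.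
Qed.

Lemma qchiX (F : finFieldType) (a : F) (k : nat) : (2 : F) != 0 ->
  qchi (a ^+ k) = qchi a ^+ k.
Proof.
move=> h2; elim: k => [|k IH]; first by rewrite !expr0 /qchi oner_eq0 /=;
  case: existsP => // [[]]; exists 1; rewrite expr1n.
by rewrite !exprS qchiM // IH.
Qed.

Lemma sumr_constF (F : finFieldType) (c : int) : \sum_(s : F) c = #|F|%:R * c.
Proof. by rewrite sumr_const mulr_natl. Qed.

Lemma sum_splitF (F : finFieldType) (f g : F -> int) :
  \sum_(s : F) (f s + g s) = \sum_(s : F) f s + \sum_(s : F) g s.
Proof. exact: big_split. Qed.

Lemma sum_Nsq_aux (F : finFieldType) (N : F) : N != 0 ->
  \sum_(s : F) (#|F|%:R * (N * s ^+ 2 == 0)%:R - 1 : int) = 0.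
Proof.
move=> N0; rewrite big_split /= sumrN -mulr_sumr sum_Nsq0 // sumr_const.
by rewrite mulr1 subrr.
Qed.

Lemma odd_case (F : finFieldType) (k : nat) : (2 : F) != 0 ->
  ((k.*2.+3)%:R : F) != 0 ->
  (#|F|%:R : int) * (Kcount F k.*2.+3)%:Z = #|F|%:R *
  ((#|F|%:R) ^+ k.*2.+1 * (#|F|%:R - 1)
   - qchi ((-1) ^+ k.+1 * (k.*2.+3)%:R : F) * (#|F|%:R - 1) * (#|F|%:R) ^+ k).
Proof.
move=> h2 N0.
have hA := @ident F k.*2.+2 h2 N0.
have G1 := fun c => (@Gc_closed F k.+1 h2 c).1.
rewrite doubleS in G1.
rewrite Kz_split mulrBr.
set A0 := \sum_(y : 'rV[F]_k.*2.+3) _.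
set q : int := #|F|%:R in hA G1 *.
set N : F := (k.*2.+3)%:R in hA N0 *.
have hA' : q * A0 = \sum_(s : F) Gc k.*2.+3 (N * s ^+ 2) - (q - 1) * q ^+ k.*2.+2.
  by rewrite hA; ring.
rewrite hA' G1 qchi0 mulr0 addr0.
under eq_bigr do rewrite G1.
rewrite sum_splitF sumr_constF -mulr_sumr sum_qchi_Nsq qchiM // qchiX // -/q.
rewrite !exprS -!addnn !exprD; ring.
Qed.

Lemma even_case (F : finFieldType) (k : nat) : (2 : F) != 0 ->
  ((k.*2.+2)%:R : F) != 0 ->
  (#|F|%:R : int) * (Kcount F k.*2.+2)%:Z = #|F|%:R *
  ((#|F|%:R) ^+ k.*2 * (#|F|%:R - 1)
   + qchi ((-1) ^+ k.+1 : F) * (#|F|%:R - 1) * (#|F|%:R) ^+ k).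
Proof.
move=> h2 N0.
have hA := @ident F k.*2.+1 h2 N0.
have G2 := fun c => (@Gc_closed F k h2 c).2.
rewrite Kz_split mulrBr.
set A0 := \sum_(y : 'rV[F]_k.*2.+2) _.
set q : int := #|F|%:R in hA G2 *.
set N : F := (k.*2.+2)%:R in hA N0 *.
have hA' : q * A0 = \sum_(s : F) Gc k.*2.+2 (N * s ^+ 2) - (q - 1) * q ^+ k.*2.+1.
  by rewrite hA; ring.
rewrite hA' G2 eqxx mulr1.
under eq_bigr do rewrite G2.
rewrite sum_splitF sumr_constF -mulr_sumr sum_Nsq_aux // qchiX //.
rewrite !exprS -!addnn !exprD; ring.
Qed.

Unset Implicit Arguments.

Theorem mainTheorem8 (F : finFieldType) (p n : nat)
  (hodd : odd #|F|) (hp : p \in [pchar F]) (hn : (2 <= n)%N) :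
  (Kcount F n)%:Z =
  (if (p %| n)%N then (#|F|%:Z) ^+ (n - 2) * (#|F|%:Z - 1)
   else if odd n then
     (#|F|%:Z) ^+ (n - 2) * (#|F|%:Z - 1)
     - qchi ((-1) ^+ ((n - 1) %/ 2) * n%:R : F) * (#|F|%:Z - 1)
       * (#|F|%:Z) ^+ ((n - 3) %/ 2)
   else
     (#|F|%:Z) ^+ (n - 2) * (#|F|%:Z - 1)
     + qchi ((-1) ^+ (n %/ 2) : F) * (#|F|%:Z - 1)
       * (#|F|%:Z) ^+ ((n - 2) %/ 2)).
Proof.
have h2 := two_neq0 hodd.
have hq : (#|F|%:R : int) = #|F|%:Z by rewrite natz.
have qnz : (#|F|%:Z : int) != 0.
  by rewrite -hq pnatr_eq0 -lt0n; apply/card_gt0P; exists 0.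
case: n hn => [|[|m]] // _.
apply: (mulfI qnz).
case: ifP => hpn.
  have hn0 : (m.+2)%:R = 0 :> F by apply/eqP; rewrite -(dvdn_pcharf hp).
  rewrite -hq (pdiv_case h2 hn0) (_ : (m.+2 - 2 = m)%N); last by lia.
  rewrite !exprS; ring.
have hN : (m.+2)%:R != 0 :> F by rewrite -(dvdn_pcharf hp) hpn.
case: ifP => ho.
  have hk : m = (m./2).*2.+1.
    by rewrite -[LHS]odd_double_half; move: ho => /= /negbNE ->.
  move: (m./2) hk => k hk; subst m.
  rewrite (_ : (k.*2.+3 - 2 = k.*2.+1)%N); last by lia.
  rewrite (_ : ((k.*2.+3 - 1) %/ 2 = k.+1)%N); last by lia.
  rewrite (_ : ((k.*2.+3 - 3) %/ 2 = k)%N); last by lia.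
  by rewrite -hq odd_case.
have hk : m = (m./2).*2.
  by rewrite -[LHS]odd_double_half; move: ho => /= /negbT /negbNE; case: (odd m).
move: (m./2) hk => k hk; subst m.
rewrite (_ : (k.*2.+2 - 2 = k.*2)%N); last by lia.
rewrite (_ : ((k.*2.+2) %/ 2 = k.+1)%N); last by lia.
rewrite (_ : (k.*2 %/ 2 = k)%N); last by lia.
by rewrite -hq even_case.
Qed.
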